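(* Let $n\ge3$, $a>0$, $0<b<a/n$, $X=\{x\in\mathbb R^n:\sum_{i=1}^nx_i=a,\ x_i\ge b,\ i=1,\dots,n\}$, $p=1+1/\ln n$, $\gamma=1/(e\ln n)$ and $\omega(x)=\frac1{p\gamma}\sum_{i=1}^n|x_i|^p$. With $\|\cdot\|=\|\cdot\|_1$: (i) $\omega$ is strongly convex on $X$ with modulus $\mu(\omega)=\frac{e}{n\,a^{2-p}}$, i.e. $(\omega'(x)-\omega'(y))^\top(x-y)\ge\frac{e}{na^{2-p}}\|x-y\|_1^2$ for all $x,y\in X$; (ii) $D_{\omega,X}:=\sqrt{2[\max_X\omega-\min_X\omega]}\le\sqrt{\frac{2a^p}{p\gamma}\big(1-n^{-1/\ln n}\big)}$; (iii) for all $x,y\in X$, $V_x(y)\le\frac12M(\omega)\|x-y\|_1^2$ with $M(\omega)=\frac{e}{b^{1-1/\ln n}}$, where $V_x(y)=\omega(y)-\omega(x)-(y-x)^\top\nabla\omega(x)$.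
   Context: $e=\exp(1)$; $\|x\|_1=\sum_i|x_i|$. *)

(* Defs.v *)
From Stdlib Require Import Reals Lra Lia.
Open Scope R_scope.

(* Vectors in R^n are functions nat -> R, only indices 0..n-1 matter. *)
Fixpoint rsum (n : nat) (f : nat -> R) : R :=
  match n with
  | O => 0
  | S k => rsum k f + f k
  end.

Definition InX (n : nat) (a b : R) (x : nat -> R) : Prop :=
  rsum n x = a /\ (forall i, (i < n)%nat -> b <= x i).

Definition norm1 (n : nat) (x : nat -> R) : R := rsum n (fun i => Rabs (x i)).

Definition pexp (n : nat) : R := 1 + 1 / ln (INR n).
Definition gam (n : nat) : R := 1 / (exp 1 * ln (INR n)).

Definition omega (n : nat) (x : nat -> R) : R :=
  1 / (pexp n * gam n) * rsum n (fun i => Rpower (Rabs (x i)) (pexp n)).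

Definition upd (x : nat -> R) (i : nat) (t : R) : nat -> R :=
  fun j => if Nat.eqb j i then t else x j.

Definition dotp (n : nat) (u v : nat -> R) : R := rsum n (fun i => u i * v i).

(* Main.v *)
Require Import Defs.
From Stdlib Require Import Reals Lra Lia FunctionalExtensionality.
Open Scope R_scope.

Lemma exp_le' x y : x <= y -> exp x <= exp y.
Proof. intros h; destruct (Rle_lt_or_eq_dec _ _ h) as [h'|h'];
  [left; apply exp_increasing; auto | right; subst; auto]. Qed.

Lemma ln_le' x y : 0 < x -> x <= y -> ln x <= ln y.
Proof. intros h0 h; destruct (Rle_lt_or_eq_dec _ _ h) as [h'|h'];
  [left; apply ln_increasing; auto | right; subst; auto]. Qed.

Lemma rpow_pos u e : 0 < Rpower u e.
Proof. unfold Rpower; apply exp_pos. Qed.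

Lemma rpow_anti u v e : 0 < u -> u <= v -> e <= 0 -> Rpower v e <= Rpower u e.
Proof. intros h1 h2 h3; unfold Rpower; apply exp_le'.
  assert (ln u <= ln v) by (apply ln_le'; auto). nra. Qed.

Lemma rpow_mono u v e : 0 < u -> u <= v -> 0 <= e -> Rpower u e <= Rpower v e.
Proof. intros h1 h2 h3; unfold Rpower; apply exp_le'.
  assert (ln u <= ln v) by (apply ln_le'; auto). nra. Qed.

Lemma rsum_S n f : rsum (S n) f = rsum n f + f n.
Proof. reflexivity. Qed.

Lemma rsum_ext n f g : (forall j, (j < n)%nat -> f j = g j) -> rsum n f = rsum n g.
Proof. induction n; intros h; simpl; auto. rewrite IHn by (intros; apply h; lia).
  rewrite h by lia; auto. Qed.

Lemma rsum_le n f g : (forall j, (j < n)%nat -> f j <= g j) -> rsum n f <= rsum n g.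
Proof. induction n; intros h; simpl; [lra|].
  assert (rsum n f <= rsum n g) by (apply IHn; intros; apply h; lia).
  assert (f n <= g n) by (apply h; lia). lra. Qed.

Lemma rsum_lin3 n u v w f g h :
  rsum n (fun i => u * f i + v * g i + w * h i) = u * rsum n f + v * rsum n g + w * rsum n h.
Proof. induction n; simpl; [ring|]. rewrite IHn; ring. Qed.

Lemma rsum_scal n c f : rsum n (fun i => c * f i) = c * rsum n f.
Proof. induction n; simpl; [ring|]. rewrite IHn; ring. Qed.

Lemma rsum_const n c : rsum n (fun _ => c) = INR n * c.
Proof. induction n; simpl rsum; [simpl; ring|]. rewrite IHn, S_INR; ring. Qed.

Lemma rsum_nonneg n f : (forall j, (j < n)%nat -> 0 <= f j) -> 0 <= rsum n f.
Proof. induction n; intros h; simpl; [lra|].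
  assert (0 <= rsum n f) by (apply IHn; intros; apply h; lia).
  assert (0 <= f n) by (apply h; lia). lra. Qed.

Lemma rsum_ge_term n f i : (forall j, (j < n)%nat -> 0 <= f j) -> (i < n)%nat -> f i <= rsum n f.
Proof. induction n; intros h hi; [lia|]. simpl.
  assert (0 <= rsum n f) by (apply rsum_nonneg; intros; apply h; lia).
  assert (0 <= f n) by (apply h; lia).
  destruct (Nat.eq_dec i n) as [->|ne]; [lra|].
  assert (f i <= rsum n f) by (apply IHn; [intros; apply h; lia | lia]). lra. Qed.

Lemma rsum_upd n f i u : (i < n)%nat ->
  rsum n (fun j => if Nat.eqb j i then u else f j) = rsum n f - f i + u.
Proof. induction n; intros hi; [lia|]. simpl.
  destruct (Nat.eqb n i) eqn:E.
  - apply Nat.eqb_eq in E; subst.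
    rewrite (rsum_ext i _ f); [ring|].
    intros j hj. destruct (Nat.eqb j i) eqn:E2; auto. apply Nat.eqb_eq in E2; lia.
  - apply Nat.eqb_neq in E. rewrite IHn by lia. ring. Qed.

Lemma sum_sq_le n d : rsum n (fun i => d i ^ 2) <= (rsum n (fun i => Rabs (d i))) ^ 2.
Proof. induction n; [simpl; lra|]. rewrite !rsum_S.
  assert (0 <= rsum n (fun i => Rabs (d i))) by (apply rsum_nonneg; intros; apply Rabs_pos).
  assert (0 <= Rabs (d n)) by apply Rabs_pos.
  assert (E : d n ^ 2 = Rabs (d n) ^ 2) by (rewrite pow2_abs; auto).
  rewrite E. nra. Qed.

Lemma cs n d : (rsum n (fun i => Rabs (d i))) ^ 2 <= INR n * rsum n (fun i => d i ^ 2).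
Proof.
  destruct n as [|n]; [simpl; lra|].
  set (Sm0 := rsum (S n) (fun i => Rabs (d i))).
  set (Q := rsum (S n) (fun i => d i ^ 2)).
  set (N := INR (S n)).
  assert (hN : 0 < N) by (unfold N; apply lt_0_INR; lia).
  set (m := Sm0 / N).
  assert (H : 0 <= rsum (S n) (fun i => (Rabs (d i) - m) ^ 2)) by
    (apply rsum_nonneg; intros; apply pow2_ge_0).
  rewrite (rsum_ext _ _ (fun i => 1 * (d i ^ 2) + (-2*m) * Rabs (d i) + m^2 * 1)) in H.
  2:{ intros j _. rewrite <- (pow2_abs (d j)). ring. }
  rewrite rsum_lin3, rsum_const in H. fold Sm0 Q N in H.
  assert (Sm : Sm0 = N * m) by (unfold m; field; lra).
  rewrite Sm in H |- *. nra.
Qed.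

Lemma mvt1 q x y : 0 < x -> 0 < y -> exists z, (x <= z <= y \/ y <= z <= x) /\
  Rpower x q - Rpower y q = q * Rpower z (q - 1) * (x - y).
Proof.
  intros hx hy.
  destruct (Rtotal_order x y) as [h|[h|h]].
  - destruct (MVT_cor2 (fun t => Rpower t q) (fun t => q * Rpower t (q - 1)) x y h) as [c [Hc Hc2]].
    { intros c Hc. apply derivable_pt_lim_power. lra. }
    exists c. split; [lra|].
    assert (E : q * Rpower c (q - 1) * (x - y) = - (q * Rpower c (q - 1) * (y - x))) by ring.
    rewrite E, <- Hc. ring.
  - subst; exists y; split; [lra|ring].
  - destruct (MVT_cor2 (fun t => Rpower t q) (fun t => q * Rpower t (q - 1)) y x h) as [c [Hc Hc2]].
    { intros c Hc. apply derivable_pt_lim_power. lra. }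
    exists c. split; [lra|]. exact Hc.
Qed.

Lemma taylor2 p x y : 0 < x -> 0 < y -> exists z, (x <= z <= y \/ y <= z <= x) /\
  Rpower y p - Rpower x p - p * Rpower x (p - 1) * (y - x) = p * (p - 1) * Rpower z (p - 2) * (y - x) ^ 2 / 2.
Proof.
  intros hx hy.
  destruct (Req_dec x y) as [exy|nxy].
  { subst. exists y. split; [lra|field]. }
  set (k := p * Rpower x (p - 1)).
  set (Fy := Rpower y p - Rpower x p - k * (y - x)).
  set (D := (y - x) * (y - x)).
  set (phi := fun t => (Rpower t p - Rpower x p - k * (t - x)) * D - Fy * ((t - x) * (t - x))).
  set (phi' := fun t => (p * Rpower t (p - 1) - k) * D - Fy * (2 * (t - x))).
  assert (Hd : forall c, 0 < c -> derivable_pt_lim phi c (phi' c)).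
  { intros c H. unfold phi, phi'.
    assert (H1 := derivable_pt_lim_power c p H).
    assert (Hid := derivable_pt_lim_id c).
    assert (Hc := fun a => derivable_pt_lim_const a c).
    assert (H2 := derivable_pt_lim_minus _ _ _ _ _ Hid (Hc x)).
    assert (H3 := derivable_pt_lim_mult _ _ _ _ _ (Hc k) H2).
    assert (H4 := derivable_pt_lim_minus _ _ _ _ _ H1 (Hc (Rpower x p))).
    assert (H5 := derivable_pt_lim_minus _ _ _ _ _ H4 H3).
    assert (H6 := derivable_pt_lim_mult _ _ _ _ _ H5 (Hc D)).
    assert (H7 := derivable_pt_lim_mult _ _ _ _ _ H2 H2).
    assert (H8 := derivable_pt_lim_mult _ _ _ _ _ (Hc Fy) H7).
    assert (H9 := derivable_pt_lim_minus _ _ _ _ _ H6 H8).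
    unfold mult_fct, minus_fct, id, fct_cte in H9.
    match type of H9 with derivable_pt_lim _ _ ?l =>
      replace ((p * Rpower c (p - 1) - k) * D - Fy * (2 * (c - x))) with l by (unfold id; ring) end.
    exact H9. }
  assert (Hx : phi x = 0). { unfold phi. cbv beta. ring. }
  assert (Hy : phi y = 0). { unfold phi. cbv beta. unfold Fy, D. ring. }
  assert (key : exists c, (x < c < y \/ y < c < x) /\ phi' c = 0).
  { destruct (Rtotal_order x y) as [h|[h|h]]; [| contradiction |].
    - destruct (MVT_cor2 phi phi' x y h) as [c [Hc Hc2]].
      { intros c Hc. apply Hd. lra. }
      exists c. split; [lra|]. rewrite Hx, Hy in Hc.
      destruct (Rmult_integral (phi' c) (y - x)) as [E|E]; [lra|auto|lra].
    - destruct (MVT_cor2 phi phi' y x h) as [c [Hc Hc2]].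
      { intros c Hc. apply Hd. lra. }
      exists c. split; [lra|]. rewrite Hx, Hy in Hc.
      destruct (Rmult_integral (phi' c) (x - y)) as [E|E]; [lra|auto|lra]. }
  destruct key as [c [Hc Hc0]].
  destruct (mvt1 (p - 1) c x) as [z [Hz Ez]]; [lra|lra|].
  replace (p - 1 - 1) with (p - 2) in Ez by ring.
  exists z. split; [lra|].
  assert (E : (c - x) * (p * (p - 1) * Rpower z (p - 2) * D - 2 * Fy) = 0).
  { rewrite <- Hc0. unfold phi'.
    replace (p * Rpower c (p - 1) - k) with (p * (Rpower c (p - 1) - Rpower x (p - 1))) by (unfold k; ring).
    rewrite Ez. ring. }
  destruct (Rmult_integral _ _ E) as [E1|E1]; [lra|].
  fold k. fold Fy. unfold D in E1. lra.
Qed.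

Lemma g_eq n a b g x i :
  (forall x, InX n a b x -> forall i, (i < n)%nat ->
     derivable_pt_lim (fun t => omega n (upd x i t)) (x i) (g x i)) ->
  0 < b -> InX n a b x -> (i < n)%nat ->
  g x i = 1 / (pexp n * gam n) * (pexp n * Rpower (x i) (pexp n - 1)).
Proof.
  intros hg hb hx hi.
  assert (xi : 0 < x i) by (destruct hx as [_ h]; specialize (h i hi); lra).
  assert (Ef : (fun t => omega n (upd x i t)) =
     (fun t => 1 / (pexp n * gam n) * (Rpower (Rabs t) (pexp n) +
        (rsum n (fun j => Rpower (Rabs (x j)) (pexp n)) - Rpower (Rabs (x i)) (pexp n))))).
  { apply functional_extensionality; intro t. unfold omega. f_equal. unfold upd.
    rewrite (rsum_ext n _ (fun j => if Nat.eqb j i then Rpower (Rabs t) (pexp n)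
                                   else Rpower (Rabs (x j)) (pexp n))).
    - rewrite (rsum_upd n (fun j => Rpower (Rabs (x j)) (pexp n))); auto. ring.
    - intros j _. destruct (Nat.eqb j i); reflexivity. }
  specialize (hg x hx i hi). rewrite Ef in hg.
  set (C := 1 / (pexp n * gam n)) in *.
  set (p := pexp n) in *.
  set (K := rsum n (fun j => Rpower (Rabs (x j)) p) - Rpower (Rabs (x i)) p) in *.
  assert (H1 := Rabs_derive_1 (x i) xi).
  assert (H2 : derivable_pt_lim (fun u => Rpower u p) (Rabs (x i)) (p * Rpower (x i) (p - 1))).
  { rewrite Rabs_pos_eq by lra. apply derivable_pt_lim_power. lra. }
  assert (H3 := derivable_pt_lim_comp _ _ _ _ _ H1 H2).
  assert (H4 := derivable_pt_lim_plus _ _ _ _ _ H3 (derivable_pt_lim_const K (x i))).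
  assert (H5 := derivable_pt_lim_mult _ _ _ _ _ (derivable_pt_lim_const C (x i)) H4).
  unfold comp, plus_fct, mult_fct, fct_cte in H5.
  rewrite (uniqueness_limite _ _ _ _ hg H5). ring.
Qed.

Lemma Lge1 n : (3 <= n)%nat -> 1 <= ln (INR n).
Proof. intros h. assert (H3 : 3 <= INR n) by (apply le_INR in h; simpl in h; lra).
  rewrite <- (ln_exp 1) at 1. apply ln_le'; [apply exp_pos|]. pose proof exp_le_3. lra. Qed.

Lemma const_eq L : 1 <= L ->
  1 / ((1 + 1 / L) * (1 / (exp 1 * L))) * (1 + 1 / L) * (1 + 1 / L - 1) = exp 1.
Proof. intros h. pose proof (exp_pos 1). field. split; lra. Qed.

Lemma xle n a b x i : 0 < b -> InX n a b x -> (i < n)%nat -> x i <= a.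
Proof. intros hb [hs hx] hi. rewrite <- hs. apply rsum_ge_term; auto.
  intros j hj; specialize (hx j hj); lra. Qed.

Lemma xge n a b x i : InX n a b x -> (i < n)%nat -> b <= x i.
Proof. intros [_ hx] hi. auto. Qed.

Lemma part_i n a b g (hn : (3 <= n)%nat) (ha : 0 < a) (hb0 : 0 < b)
  (hg : forall x, InX n a b x -> forall i, (i < n)%nat ->
          derivable_pt_lim (fun t => omega n (upd x i t)) (x i) (g x i)) :
  forall x y, InX n a b x -> InX n a b y ->
     dotp n (fun i => g x i - g y i) (fun i => x i - y i)
     >= exp 1 / (INR n * Rpower a (2 - pexp n))
        * (norm1 n (fun i => x i - y i)) ^ 2.
Proof.
  intros x y hx hy.
  pose proof (Lge1 n hn) as hL. pose proof (exp_pos 1) as he.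
  set (A := Rpower a (pexp n - 2)).
  assert (hA : 0 < A) by apply rpow_pos.
  assert (Hterm : forall j, (j < n)%nat ->
     exp 1 * A * (x j - y j) ^ 2 <= (g x j - g y j) * (x j - y j)).
  { intros j hj.
    rewrite (g_eq n a b g x j), (g_eq n a b g y j); auto.
    pose proof (xge _ _ _ _ _ hx hj). pose proof (xge _ _ _ _ _ hy hj).
    pose proof (xle _ _ _ _ _ hb0 hx hj). pose proof (xle _ _ _ _ _ hb0 hy hj).
    destruct (mvt1 (pexp n - 1) (x j) (y j)) as [z [hz Ez]]; [lra|lra|].
    replace (pexp n - 1 - 1) with (pexp n - 2) in Ez by ring.
    assert (E : (1 / (pexp n * gam n) * (pexp n * Rpower (x j) (pexp n - 1)) -
                 1 / (pexp n * gam n) * (pexp n * Rpower (y j) (pexp n - 1))) * (x j - y j)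
              = exp 1 * Rpower z (pexp n - 2) * (x j - y j) ^ 2).
    { transitivity (1 / (pexp n * gam n) * pexp n * (Rpower (x j) (pexp n - 1) - Rpower (y j) (pexp n - 1)) * (x j - y j)); [ring|].
      rewrite Ez. rewrite <- (const_eq (ln (INR n))) by lra. unfold pexp, gam. ring. }
    rewrite E.
    assert (A <= Rpower z (pexp n - 2)).
    { unfold A. apply rpow_anti; [lra|lra|]. unfold pexp.
      assert (1 / ln (INR n) <= 1). { unfold Rdiv; rewrite Rmult_1_l. rewrite <- Rinv_1 at 1. apply Rinv_le_contravar; lra. }
      lra. }
    apply Rmult_le_compat_r; [apply pow2_ge_0|]. apply Rmult_le_compat_l; lra. }
  assert (H1 := rsum_le n _ _ Hterm).
  rewrite rsum_scal in H1.
  assert (H2 := cs n (fun i => x i - y i)).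
  unfold dotp, norm1. cbv beta in *.
  set (Q := rsum n (fun i => (x i - y i) ^ 2)) in *.
  set (S := rsum n (fun i => Rabs (x i - y i))) in *.
  assert (hN : 0 < INR n) by (apply lt_0_INR; lia).
  replace (2 - pexp n) with (- (pexp n - 2)) by ring. rewrite Rpower_Ropp. fold A.
  replace (exp 1 / (INR n * / A) * S ^ 2) with (exp 1 * A / INR n * S ^ 2) by (field; lra).
  apply Rle_ge.
  apply Rle_trans with (exp 1 * A * Q); [|exact H1].
  replace (exp 1 * A * Q) with (exp 1 * A / INR n * (INR n * Q)) by (field; lra).
  apply Rmult_le_compat_l; [|exact H2].
  apply Rlt_le, Rdiv_lt_0_compat; [nra|lra].
Qed.

Lemma p_facts n : (3 <= n)%nat -> 1 < pexp n /\ pexp n <= 2 /\ 0 < gam n.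
Proof. intros hn. pose proof (Lge1 n hn). pose proof (exp_pos 1).
  assert (0 < 1 / ln (INR n)) by (apply Rdiv_lt_0_compat; lra).
  assert (1 / ln (INR n) <= 1). { unfold Rdiv; rewrite Rmult_1_l. rewrite <- Rinv_1 at 1. apply Rinv_le_contravar; lra. }
  unfold pexp, gam. repeat split; try lra. apply Rdiv_lt_0_compat; [lra|nra]. Qed.

Lemma rpow_split y p : 0 < y -> Rpower y p = y * Rpower y (p - 1).
Proof. intros h. replace p with (1 + (p - 1)) at 1 by ring. rewrite Rpower_plus, Rpower_1; auto. Qed.

Lemma upper_sum n a b y : 0 < a -> 0 < b -> InX n a b y -> 1 <= pexp n ->
  rsum n (fun i => Rpower (Rabs (y i)) (pexp n)) <= Rpower a (pexp n).
Proof. intros ha hb hy hp.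
  apply Rle_trans with (rsum n (fun i => Rpower a (pexp n - 1) * y i)).
  - apply rsum_le. intros j hj. pose proof (xge _ _ _ _ _ hy hj). pose proof (xle _ _ _ _ _ hb hy hj).
    rewrite Rabs_pos_eq by lra. rewrite rpow_split by lra.
    assert (Rpower (y j) (pexp n - 1) <= Rpower a (pexp n - 1)) by (apply rpow_mono; lra).
    nra.
  - rewrite rsum_scal. destruct hy as [hs _]. rewrite hs. rewrite (rpow_split a (pexp n)) by lra. rewrite Rmult_comm; lra.
Qed.

Lemma lower_sum n a b x : (0 < n)%nat -> 0 < a -> 0 < b -> InX n a b x -> 1 <= pexp n ->
  Rpower a (pexp n) * Rpower (INR n) (1 - pexp n) <= rsum n (fun i => Rpower (Rabs (x i)) (pexp n)).
Proof. intros hn ha hb hx hp.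
  set (p := pexp n) in *.
  assert (hN : 0 < INR n) by (apply lt_0_INR; lia).
  set (c0 := a / INR n).
  assert (hc0 : 0 < c0) by (apply Rdiv_lt_0_compat; lra).
  set (K := p * Rpower c0 (p - 1)).
  apply Rle_trans with (rsum n (fun i => (Rpower c0 p - K * c0) * 1 + K * x i + 0 * 0)).
  - rewrite rsum_lin3, rsum_const. destruct hx as [hs _]. rewrite hs.
    assert (E : INR n * Rpower c0 p = Rpower a p * Rpower (INR n) (1 - p)).
    { unfold c0, Rpower. rewrite <- (exp_ln (INR n)) at 1 by lra. rewrite <- !exp_plus.
      f_equal. unfold Rdiv. rewrite ln_mult, ln_Rinv; try ring; try lra; apply Rinv_0_lt_compat; lra. }
    rewrite <- E. replace (INR n * c0) with a by (unfold c0; field; lra).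
    assert (rsum n (fun _ => 0 * 0) = 0) by (rewrite rsum_const; ring).
    assert (a = INR n * c0) by (unfold c0; field; lra). nra.
  - apply rsum_le. intros j hj. pose proof (xge _ _ _ _ _ hx hj).
    rewrite Rabs_pos_eq by lra.
    destruct (taylor2 p c0 (x j)) as [z [_ Ez]]; [lra|lra|].
    assert (0 <= p * (p - 1) * Rpower z (p - 2) * (x j - c0) ^ 2 / 2).
    { pose proof (rpow_pos z (p - 2)). pose proof (pow2_ge_0 (x j - c0)).
      assert (0 <= p * (p - 1)) by nra.
      assert (0 <= p * (p - 1) * Rpower z (p - 2)) by nra. nra. }
    fold K in Ez. nra.
Qed.

Lemma part_ii n a b (hn : (3 <= n)%nat) (ha : 0 < a) (hb0 : 0 < b) :
  forall x y, InX n a b x -> InX n a b y ->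
     sqrt (2 * (omega n y - omega n x))
     <= sqrt (2 * Rpower a (pexp n) / (pexp n * gam n)
              * (1 - Rpower (INR n) (- (1 / ln (INR n))))).
Proof.
  intros x y hx hy. destruct (p_facts n hn) as [hp1 [hp2 hg]].
  pose proof (upper_sum n a b y ha hb0 hy ltac:(lra)) as U.
  pose proof (lower_sum n a b x ltac:(lia) ha hb0 hx ltac:(lra)) as Lo.
  replace (- (1 / ln (INR n))) with (1 - pexp n) by (unfold pexp; ring).
  apply sqrt_le_1_alt. unfold omega.
  set (C := 1 / (pexp n * gam n)).
  assert (hC : 0 < C) by (unfold C; apply Rdiv_lt_0_compat; nra).
  replace (2 * Rpower a (pexp n) / (pexp n * gam n) * (1 - Rpower (INR n) (1 - pexp n)))
    with (2 * (C * Rpower a (pexp n) - C * (Rpower a (pexp n) * Rpower (INR n) (1 - pexp n))))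
    by (unfold C; field; nra).
  nra.
Qed.

Lemma part_iii n a b g (hn : (3 <= n)%nat) (ha : 0 < a) (hb0 : 0 < b)
  (hg : forall x, InX n a b x -> forall i, (i < n)%nat ->
          derivable_pt_lim (fun t => omega n (upd x i t)) (x i) (g x i)) :
  forall x y, InX n a b x -> InX n a b y ->
     omega n y - omega n x - dotp n (fun i => y i - x i) (g x)
     <= 1 / 2 * (exp 1 / Rpower b (1 - 1 / ln (INR n)))
        * (norm1 n (fun i => x i - y i)) ^ 2.
Proof.
  intros x y hx hy. destruct (p_facts n hn) as [hp1 [hp2 hg0]].
  pose proof (Lge1 n hn) as hL. pose proof (exp_pos 1) as he.
  set (B := Rpower b (pexp n - 2)).
  assert (hB : 0 < B) by apply rpow_pos.
  set (C := 1 / (pexp n * gam n)).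
  unfold omega, dotp, norm1. fold C.
  replace (C * rsum n (fun i => Rpower (Rabs (y i)) (pexp n)) -
     C * rsum n (fun i => Rpower (Rabs (x i)) (pexp n)) - rsum n (fun i => (y i - x i) * g x i))
   with (rsum n (fun i => C * Rpower (Rabs (y i)) (pexp n) + (- C) * Rpower (Rabs (x i)) (pexp n)
                          + (-1) * ((y i - x i) * g x i)))
   by (rewrite rsum_lin3; ring).
  apply Rle_trans with (rsum n (fun i => (exp 1 * B / 2) * ((x i - y i) ^ 2))).
  - apply rsum_le. intros j hj.
    rewrite (g_eq n a b g x j) by auto. fold C.
    pose proof (xge _ _ _ _ _ hx hj). pose proof (xge _ _ _ _ _ hy hj).
    rewrite !Rabs_pos_eq by lra.
    destruct (taylor2 (pexp n) (x j) (y j)) as [z [hz Ez]]; [lra|lra|].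
    assert (E : C * Rpower (y j) (pexp n) + - C * Rpower (x j) (pexp n) +
       -1 * ((y j - x j) * (C * (pexp n * Rpower (x j) (pexp n - 1))))
       = exp 1 / 2 * Rpower z (pexp n - 2) * (x j - y j) ^ 2).
    { transitivity (C * (Rpower (y j) (pexp n) - Rpower (x j) (pexp n) - pexp n * Rpower (x j) (pexp n - 1) * (y j - x j))); [ring|].
      rewrite Ez. rewrite <- (const_eq (ln (INR n))) by lra. unfold C, pexp, gam. field.
      split; [lra|]. split; [lra|]. lra. }
    rewrite E.
    assert (Rpower z (pexp n - 2) <= B) by (unfold B; apply rpow_anti; lra).
    replace (exp 1 * B / 2 * (x j - y j) ^ 2) with (exp 1 / 2 * B * (x j - y j) ^ 2) by field.
    apply Rmult_le_compat_r; [apply pow2_ge_0|]. apply Rmult_le_compat_l; lra.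
  - rewrite rsum_scal.
    pose proof (sum_sq_le n (fun i => x i - y i)) as H. cbv beta in H.
    replace (1 - 1 / ln (INR n)) with (- (pexp n - 2)) by (unfold pexp; ring).
    rewrite Rpower_Ropp. fold B.
    replace (1 / 2 * (exp 1 / / B)) with (exp 1 * B / 2) by (field; lra).
    apply Rmult_le_compat_l; [|exact H]. nra.
Qed.

Theorem mainTheorem15 (n : nat) (a b : R) (g : (nat -> R) -> nat -> R)
  (hn : (3 <= n)%nat) (ha : 0 < a) (hb0 : 0 < b) (hba : b < a / INR n)
  (hg : forall x, InX n a b x -> forall i, (i < n)%nat ->
          derivable_pt_lim (fun t => omega n (upd x i t)) (x i) (g x i)) :
  (forall x y, InX n a b x -> InX n a b y ->
     dotp n (fun i => g x i - g y i) (fun i => x i - y i)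
     >= exp 1 / (INR n * Rpower a (2 - pexp n))
        * (norm1 n (fun i => x i - y i)) ^ 2)
  /\
  (forall x y, InX n a b x -> InX n a b y ->
     sqrt (2 * (omega n y - omega n x))
     <= sqrt (2 * Rpower a (pexp n) / (pexp n * gam n)
              * (1 - Rpower (INR n) (- (1 / ln (INR n))))))
  /\
  (forall x y, InX n a b x -> InX n a b y ->
     omega n y - omega n x - dotp n (fun i => y i - x i) (g x)
     <= 1 / 2 * (exp 1 / Rpower b (1 - 1 / ln (INR n)))
        * (norm1 n (fun i => x i - y i)) ^ 2).
Proof.
  split; [apply (part_i n a b g); auto|].
  split; [apply (part_ii n a b); auto|].
  apply (part_iii n a b g); auto.
Qed.
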